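(* Let $(U,d)$ be an asymmetric pseudometric space with $|U|=n$, $k$ an integer with $2\le k\le n$, and $R^*>0$ the optimal AMMD value. Then the algorithm $\mathrm{BAC}(U,d,k)$ (described in the context) is a $\frac{1}{6k}$-approximation for AMMD: it returns a set $S\subseteq U$ with $|S|=k$ and $\operatorname{div}(S)\ge \frac{R^*}{6k}$.
   Context: An asymmetric pseudometric space $(U,d)$ is a finite set $U$ with $d:U\times U\to\mathbb{R}_{\ge 0}$ such that $d(u,u)=0$ and $d(u,v)\le d(u,w)+d(w,v)$ for all $u,v,w\in U$ ($d$ need not be symmetric). For $S\subseteq U$, $\operatorname{div}(S)=\min_{u,v\in S,\,u\ne v} d(u,v)$; AMMD asks for $O\subseteq U$, $|O|=k$, maximizing $\operatorname{div}(O)$, with maximum value $R^*$. $d_{\min}(u,v)=\min\{d(u,v),d(v,u)\}$, $d_{\max}(u,v)=\max\{d(u,v),d(v,u)\}$. Cluster$(U,d,R)$ (for $R>0$): initially all points are unmarked; while an unmarked point exists, choose any unmarked point $c$, let $A=\{v \text{ unmarked}: d_{\max}(c,v)<R\}$, mark all points of $A$, and add $c$ to the output set $U'$. Return $U'$. Extract$(W,d,\sigma,k)$ (for $W\subseteq U$, $\sigma>0$): build the digraph $G$ on $W$ with an arc $ij$ ($i\ne j$) iff $d(i,j)<\sigma$. If $G$ contains a directed cycle, let $C$ be a chordless directed cycle of $G$ (no arcs of $G$ between non-consecutive vertices of the cycle). Let $G_c$ be the condensation of $G$ (vertices are strongly connected components), $M$ a maximum antichain of $G_c$ (a maximum set of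 pairwise mutually unreachable vertices), and $L$ a path in $G_c$ with $2k-1$ arcs that is a shortest path between its endpoints, or, if none exists, a longest path among shortest paths found in $G_c$; $|C|,|L|$ denote numbers of vertices. If $C$ exists, $|C|\ge 2|M|-1$ and $|C|\ge|L|$, let $I$ be the vertices of $C=(v_1,\dots,v_\ell)$ with odd indices; else if $2|M|-1\ge|L|$, let $I$ consist of one point of $G$ from each component in $M$; else let $I$ consist of one point of $G$ from each component on $L$ with odd index. If $|I|\ge k$, output $k$ points greedily selected from $I$ (repeatedly adding a point of $I$ maximizing the $d_{\min}$-distance to the already selected points); otherwise return nothing. BAC$(U,d,k)$: for every $R\in\{d(i,j)>0: i,j\in U, i\ne j\}$, compute $U'=$ Cluster$(U,d,R)$ and call Extract$(U',d,R/(2k),k)$; return the set with the largest $\operatorname{div}$ among all sets returned by Extract. *)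

(* Defs.v *)
From HB Require Import structures.
From mathcomp Require Import all_boot all_order all_algebra.
Set Implicit Arguments. Unset Strict Implicit. Unset Printing Implicit Defensive.
Import Order.TTheory GRing.Theory Num.Theory.
Local Open Scope ring_scope.

Section AMMD.
Variables (R : realFieldType) (T : finType) (d : T -> T -> R).

Definition asym_pseudometric : Prop :=
  [/\ forall u v, 0 <= d u v, forall u, d u u = 0 &
      forall u v w, d u v <= d u w + d w v].

Definition dmin (u v : T) : R := Num.min (d u v) (d v u).
Definition dmax (u v : T) : R := Num.max (d u v) (d v u).

(* default value (max of all distances, >= 0); for |S| >= 2, div S is exactly
   the minimum of d u v over ordered pairs of distinct points of S. *)
Definition dtop : R := \big[Num.max/0]_(p : T * T) d p.1 p.2.

Definition div (S : {set T}) : R :=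
  \big[Num.min/dtop]_(p : T * T | (p.1 \in S) && (p.2 \in S) && (p.1 != p.2))
     d p.1 p.2.

(* optimal AMMD value R^* : max of div O over |O| = k (div >= 0, so the
   default 0 is harmless as soon as k <= |U|) *)
Definition ammd_opt (k : nat) : R :=
  \big[Num.max/0]_(O : {set T} | #|O| == k) div O.

(* cluster_run r marked U' : starting with the set of marked points [marked],
   the loop can terminate having added exactly the centers U'. *)
Inductive cluster_run (r : R) : {set T} -> {set T} -> Prop :=
| cr_done (marked : {set T}) : marked = setT -> cluster_run r marked set0
| cr_step (marked : {set T}) (c : T) (U' : {set T}) :
    c \notin marked ->
    cluster_run r (marked :|: [set v | (v \notin marked) && (dmax c v < r)]) U' ->
    cluster_run r marked (c |: U').

Definition cluster_out (r : R) (U' : {set T}) : Prop := cluster_run r set0 U'.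

Section Extract.
Variables (W : {set T}) (sigma : R) (k : nat).

Definition arc : rel T :=
  fun i j => [&& i \in W, j \in W, i != j & d i j < sigma].

Definition reach (x y : T) : bool := connect arc x y.

Definition scc (x : T) : {set T} := [set y in W | reach x y && reach y x].

Definition is_comp (A : {set T}) : bool := [exists x in W, A == scc x].

Definition gc_arc : rel {set T} :=
  fun A B => [&& is_comp A, is_comp B, A != B &
              [exists x in A, exists y in B, arc x y]].

Definition dcycle (c : seq T) : bool :=
  [&& (1 < size c)%N, uniq c, all (fun x => x \in W) c & cycle arc c].

Definition chordless (c : seq T) : Prop :=
  forall (x0 : T) i j, (i < size c)%N -> (j < size c)%N ->
    arc (nth x0 c i) (nth x0 c j) -> j = (i.+1 %% size c)%N.

Definition antichain (M : {set {set T}}) : Prop :=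
  (forall A, A \in M -> is_comp A) /\
  (forall A B, A \in M -> B \in M -> A != B ->
     forall x y, x \in A -> y \in B -> ~~ reach x y).

Definition max_antichain (M : {set {set T}}) : Prop :=
  antichain M /\ forall M', antichain M' -> (#|M'| <= #|M|)%N.

(* a path a0 -> ps of G_c (its number of arcs is size ps), shortest between
   its endpoints *)
Definition gc_path (a0 : {set T}) (ps : seq {set T}) : bool :=
  is_comp a0 && path gc_arc a0 ps.

Definition shortest_gc_path (a0 : {set T}) (ps : seq {set T}) : Prop :=
  gc_path a0 ps /\
  forall qs, gc_path a0 qs -> last a0 qs = last a0 ps -> (size ps <= size qs)%N.

Definition L_choice (a0 : {set T}) (ps : seq {set T}) : Prop :=
  shortest_gc_path a0 ps /\
  (size ps = (2 * k)%N.-1 \/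
   ((forall b0 qs, shortest_gc_path b0 qs -> size qs <> (2 * k)%N.-1) /\
    (forall b0 qs, shortest_gc_path b0 qs -> (size qs <= size ps)%N))).

Definition one_point_each (F : seq {set T}) (I : {set T}) : Prop :=
  (forall x, x \in I -> exists2 A, A \in F & x \in A) /\
  (forall A, A \in F -> #|I :&: A| = 1%N).

(* items of a sequence with odd 1-based index (= even 0-based index) *)
Definition odd_index (X : Type) (s : seq X) : seq X :=
  mask [seq ~~ odd i | i <- iota 0 (size s)] s.

(* the set I selected by Extract, for some admissible choice of the chordless
   cycle C (when G has a directed cycle), the maximum antichain M, the path L
   and the representatives *)
Definition I_choice (I : {set T}) : Prop :=
  exists (M : {set {set T}}) (a0 : {set T}) (ps : seq {set T})
         (copt : option (seq T)),
  [/\ max_antichain M, L_choice a0 ps,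
      (copt = None <-> ~ exists c, dcycle c),
      (forall c, copt = Some c -> dcycle c /\ chordless c) &
  let sizeL := (size ps).+1 in
  let sizeM2 := (2 * #|M|)%N.-1 in
  let useC := exists c, [/\ copt = Some c, (sizeM2 <= size c)%N & (sizeL <= size c)%N] in
     (exists c, [/\ copt = Some c, (sizeM2 <= size c)%N, (sizeL <= size c)%N &
                    I = [set x in odd_index c]])
  \/ [/\ ~ useC, (sizeL <= sizeM2)%N & one_point_each (enum M) I]
  \/ [/\ ~ useC, (sizeM2 < sizeL)%N & one_point_each (odd_index (a0 :: ps)) I]].

Definition dist_to (y : T) (p : seq T) : R :=
  foldr (fun z acc => Num.min (dmin y z) acc) (dmin y (head y p)) p.

Definition greedy (I : {set T}) (s : seq T) : Prop :=
  [/\ size s = k, uniq s, (forall x, x \in s -> x \in I) &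
      forall (x0 : T) j, (0 < j < k)%N ->
        forall y, y \in I -> y \notin take j s ->
          dist_to y (take j s) <= dist_to (nth x0 s j) (take j s)].

(* extract_res o : o is a possible result of Extract(W,d,sigma,k)
   (None = "returns nothing") *)
Definition extract_res (o : option {set T}) : Prop :=
  exists I, I_choice I /\
    (if (k <= #|I|)%N then exists s, greedy I s /\ o = Some [set x in s]
     else o = None).
End Extract.

Definition bac_res (k : nat) (o : option {set T}) : Prop :=
  exists (Uc : R -> {set T}) (out : R -> option {set T}),
  [/\ (forall i j, i != j -> 0 < d i j ->
         cluster_out (d i j) (Uc (d i j)) /\
         extract_res (Uc (d i j)) (d i j / (2 * k)%N%:R) k (out (d i j))),
      (o = None <-> forall i j, i != j -> 0 < d i j -> out (d i j) = None) &
      (forall S, o = Some S ->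
         exists i j, [/\ i != j, 0 < d i j, out (d i j) = Some S &
           forall i' j' S', i' != j' -> 0 < d i' j' -> out (d i' j') = Some S' ->
             div S' <= div S])].
End AMMD.

(* Main.v *)
Require Import Defs.
From HB Require Import structures.
From mathcomp Require Import all_boot all_order all_algebra.
From mathcomp Require Import zify.
From mathcomp Require Import lra.
From Stdlib Require Import ClassicalEpsilon.
Set Implicit Arguments. Unset Strict Implicit. Unset Printing Implicit Defensive.
Import Order.TTheory GRing.Theory Num.Theory.
Local Open Scope ring_scope.

Definition pb (P : Prop) : bool := if excluded_middle_informative P then true else false.
Lemma pbP (P : Prop) : reflect P (pb P).
Proof. by rewrite /pb; case: excluded_middle_informative => h; constructor. Qed.

Lemma ex_max_nat (P : nat -> Prop) (B n0 : nat) :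
  (forall n, P n -> (n <= B)%N) -> P n0 -> exists n, P n /\ forall m, P m -> (m <= n)%N.
Proof.
move=> hB h0.
have ex : exists n, pb (P n) by exists n0; apply/pbP.
have ub : forall n, pb (P n) -> (n <= B)%N by move=> n /pbP; apply: hB.
case: (ex_maxnP ex ub) => n /pbP Pn hm; exists n; split=> // m Pm; apply: hm; exact/pbP.
Qed.

Lemma ex_min_nat (P : nat -> Prop) (n0 : nat) :
  P n0 -> exists n, P n /\ forall m, P m -> (n <= m)%N.
Proof.
move=> h0.
have ex : exists n, pb (P n) by exists n0; apply/pbP.
case: (ex_minnP ex) => n /pbP Pn hm; exists n; split=> // m Pm; apply: hm; exact/pbP.
Qed.

Section Gen.
Variables (R : realFieldType) (T : finType) (d : T -> T -> R).

Lemma ex_argmax (X : finType) (P : X -> Prop) (f : X -> R) x0 :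
  P x0 -> exists x, P x /\ forall y, P y -> f y <= f x.
Proof.
move=> h0.
have h0' : (fun x => pb (P x)) x0 by apply/pbP.
case: (@arg_maxP _ _ X x0 (fun x => pb (P x)) f h0') => x /pbP Px hm; exists x; split=> // y Py; apply: hm; exact/pbP.
Qed.

Lemma ex_argmin (X : finType) (P : X -> Prop) (f : X -> R) x0 :
  P x0 -> exists x, P x /\ forall y, P y -> f x <= f y.
Proof.
move=> h0.
have h0' : (fun x => pb (P x)) x0 by apply/pbP.
case: (@arg_minP _ _ X x0 (fun x => pb (P x)) f h0') => x /pbP Px hm; exists x; split=> // y Py; apply: hm; exact/pbP.
Qed.

Lemma dmaxC u v : dmax d u v = dmax d v u.
Proof. by rewrite /dmax maxC. Qed.

Lemma dmax_ge1 u v : d u v <= dmax d u v.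
Proof. by rewrite /dmax le_max lexx. Qed.
Lemma dmax_ge2 u v : d v u <= dmax d u v.
Proof. by rewrite /dmax le_max lexx orbT. Qed.

Lemma dtop_ge u v : d u v <= dtop d.
Proof.
rewrite /dtop (bigD1 (u, v)) //= le_max lexx //.
Qed.

Lemma div_le (S : {set T}) u v : u \in S -> v \in S -> u != v -> div d S <= d u v.
Proof.
move=> uS vS uv; rewrite /div (bigD1 (u, v)) /= ?uS ?vS ?uv //.
by rewrite ge_min lexx.
Qed.

Lemma div_ge (S : {set T}) z :
  z <= dtop d -> (forall u v, u \in S -> v \in S -> u != v -> z <= d u v) -> z <= div d S.
Proof.
move=> hz h; rewrite /div; apply: le_bigmin => // [[u v]] /= /andP[/andP[uS vS] uv].
exact: h.
Qed.

Lemma ammd_attained k : 0 < ammd_opt d k ->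
  exists O : {set T}, #|O| = k /\ div d O = ammd_opt d k.
Proof.
rewrite /ammd_opt.
pose Q (x : R) := x = 0 \/ exists O : {set T}, #|O| == k /\ x = div d O.
have : Q (\big[Num.max/0]_(O : {set T} | #|O| == k) div d O).
  apply: (big_ind Q); first by left.
    move=> x y Qx Qy; rewrite /Num.max /Order.max; case: ifP => _ //.
  by move=> O hO; right; exists O.
case=> [-> | [O [/eqP hO ->]]]; first by rewrite ltxx.
by move=> _; exists O.
Qed.

End Gen.

Section Clu.
Variables (R : realFieldType) (T : finType) (d : T -> T -> R).
Hypothesis d0 : forall u, d u u = 0.

Lemma dmax0 u : dmax d u u = 0.
Proof. by rewrite /dmax d0 maxxx. Qed.

Lemma cluster_ex r : 0 < r -> forall marked, exists U', cluster_run d r marked U'.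
Proof.
move=> r0 marked.
move: {2}#|~: marked| (leqnn #|~: marked|) => n.
elim: n marked => [|n IH] marked hn.
  exists set0; apply: cr_done; apply/setP => x; rewrite inE.
  case: (boolP (x \in marked)) => // hx.
  have hx' : x \in ~: marked by rewrite inE.
  have : (0 < #|~: marked|)%N by apply/card_gt0P; exists x.
  by rewrite leqn0 in hn; rewrite (eqP hn).
case: (boolP (marked == setT)) => [/eqP -> | hm].
  by exists set0; apply: cr_done.
have : exists c, c \notin marked.
  apply/existsP; move: hm; apply: contraR => /existsPn h.
  by apply/eqP/setP => x; rewrite inE; move: (h x); rewrite negbK.
case=> c hc.
pose m' := marked :|: [set v | (v \notin marked) && (dmax d c v < r)].
have cm' : c \in m' by rewrite inE inE hc dmax0 r0 orbT.
have : (#|~: m'| <= n)%N.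
  rewrite -ltnS; apply: leq_trans hn; apply: proper_card.
  apply/properP; split.
    by apply/subsetP => x; rewrite !inE negb_or => /andP[].
  by exists c; rewrite inE ?cm'.
case/IH => U' hU'; exists (c |: U'); exact: cr_step.
Qed.

Lemma cluster_props r marked U' : cluster_run d r marked U' ->
  [/\ forall v, v \notin marked -> exists2 c, c \in U' & dmax d c v < r,
      forall c, c \in U' -> c \notin marked &
      forall c c', c \in U' -> c' \in U' -> c != c' -> r <= dmax d c c'].
Proof.
elim=> {marked U'} [marked -> | marked c U' hc _ [h1 h2 h3]].
  split; [by move=> v; rewrite inE | by move=> c; rewrite inE | by move=> c c'; rewrite inE].
split.
- move=> v hv.
  case: (boolP (dmax d c v < r)) => hcv; first by exists c; rewrite // setU11.
  have : v \notin marked :|: [set v | (v \notin marked) && (dmax d c v < r)].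
    by rewrite !inE negb_or hv /= (negbTE hcv).
  by case/h1 => c' hc' h; exists c'; rewrite // inE hc' orbT.
- move=> c'; rewrite !inE => /orP[/eqP -> // | /h2].
  by rewrite !inE negb_or => /andP[].
- have key : forall c', c' \in U' -> c' != c -> r <= dmax d c c'.
    move=> c' /h2; rewrite !inE negb_or => /andP[hm']; rewrite negb_and hm' /= -leNgt.
    by move=> ->.
  move=> x y; rewrite !inE => /orP[/eqP -> | hx] /orP[/eqP -> | hy] hxy.
  + by rewrite eqxx in hxy.
  + by apply: key; rewrite // eq_sym.
  + by rewrite dmaxC; apply: key.
  + exact: h3.
Qed.

End Clu.

Lemma last_take (X : Type) (x : X) (p : seq X) i :
  (i <= size p)%N -> last x (take i p) = nth x (x :: p) i.
Proof.
elim: p x i => [|y p IH] x [|i] //= hi.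
by rewrite IH // (set_nth_default x) //.
Qed.

Lemma nonuniq_short (X : eqType) (e : rel X) x p :
  path e x p -> ~~ uniq (x :: p) ->
  exists p', [/\ path e x p', last x p' = last x p & (size p' < size p)%N].
Proof.
elim: p x => [|y p IH] x //=.
move=> /andP[exy hp]; rewrite negb_and negbK => /orP[hx | hu].
  have hp' : path e x (y :: p) by rewrite /= exy.
  suff : exists p', [/\ path e x p', last x p' = last x (y :: p) & (size p' < size (y :: p))%N] by [].
  move: hx hp'; case/splitPr => p1 p2.
  rewrite cat_path /= => /and3P[_ _ hp2].
  exists p2; split => //; first by rewrite last_cat.
  by rewrite size_cat /= addnS ltnS leq_addl.
case: (IH y hp hu) => p' [h1 h2 h3].
exists (y :: p'); split => /=; by rewrite ?exy ?h1 ?h2.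
Qed.

Lemma nonuniq_cw (X : eqType) (e : rel X) x p :
  path e x p -> ~~ uniq (x :: p) ->
  exists z q, [/\ path e z q, last z q = z, (0 < size q)%N & (size q <= size p)%N].
Proof.
elim: p x => [|y p IH] x //=.
move=> /andP[exy hp]; rewrite negb_and negbK => /orP[hx | hu].
  have hp' : path e x (y :: p) by rewrite /= exy.
  suff : exists z q, [/\ path e z q, last z q = z, (0 < size q)%N & (size q <= size (y :: p))%N] by [].
  move: hx hp'; case/splitPr => p1 p2.
  rewrite cat_path /= => /and3P[h1 h2 _].
  exists x, (rcons p1 x); split.
  - by rewrite rcons_path h1 h2.
  - by rewrite last_rcons.
  - by rewrite size_rcons.
  - by rewrite size_rcons size_cat /= addnS ltnS leq_addr.
case: (IH y hp hu) => z [q [h1 h2 h3 h4]].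
by exists z, q; split => //; apply: leq_trans h4 _.
Qed.

Section Graph.
Variables (R : realFieldType) (T : finType) (d : T -> T -> R).
Hypothesis d0 : forall u, d u u = 0.
Hypothesis tri : forall u v w, d u v <= d u w + d w v.
Variables (W : {set T}) (sigma : R).

Local Notation arc := (Defs.arc d W sigma).
Local Notation reach := (reach d W sigma).
Local Notation scc := (scc d W sigma).
Local Notation is_comp := (is_comp d W sigma).
Local Notation gc_arc := (gc_arc d W sigma).

Lemma arcP x y : arc x y = [&& x \in W, y \in W, x != y & d x y < sigma].
Proof. by []. Qed.

Lemma arc_W x y : arc x y -> (x \in W) /\ (y \in W).
Proof. by case/and4P. Qed.

Lemma noarc_ge x y : x \in W -> y \in W -> x != y -> ~~ arc x y -> sigma <= d x y.
Proof. by move=> hx hy hxy; rewrite arcP hx hy hxy /= -leNgt. Qed.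

Lemma reach_refl x : reach x x.
Proof. exact: connect0. Qed.

Lemma reach_trans x y z : reach x y -> reach y z -> reach x z.
Proof. exact: connect_trans. Qed.

Lemma arc_reach x y : arc x y -> reach x y.
Proof. by move=> h; apply: connect1. Qed.

Lemma scc_in x y : (y \in scc x) = [&& y \in W, reach x y & reach y x].
Proof. by rewrite inE. Qed.

Lemma scc_self x : x \in W -> x \in scc x.
Proof. by move=> hx; rewrite scc_in hx reach_refl. Qed.

Lemma scc_eq x y : y \in scc x -> scc y = scc x.
Proof.
rewrite scc_in => /and3P[_ hxy hyx]; apply/setP => z; rewrite !scc_in.
case: (z \in W) => //=; apply/andP/andP => [[h1 h2] | [h1 h2]]; split.
- exact: reach_trans hxy h1.
- exact: reach_trans h2 hyx.
- exact: reach_trans hyx h1.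
- exact: reach_trans h2 hxy.
Qed.

Lemma is_compP A : reflect (exists2 x, x \in W & A = scc x) (is_comp A).
Proof.
apply: (iffP existsP) => [[x /andP[hx /eqP ->]] | [x hx ->]]; first by exists x.
by exists x; rewrite hx eqxx.
Qed.

Lemma comp_sub A x : is_comp A -> x \in A -> x \in W.
Proof. by case/is_compP => y _ ->; rewrite scc_in => /andP[]. Qed.

Lemma comp_eq A x : is_comp A -> x \in A -> A = scc x.
Proof. by case/is_compP => y _ -> h; rewrite (scc_eq h). Qed.

Lemma comp_disj A B x : is_comp A -> is_comp B -> x \in A -> x \in B -> A = B.
Proof. by move=> hA hB xA xB; rewrite (comp_eq hA xA) (comp_eq hB xB). Qed.

Lemma comp_reach A x y : is_comp A -> x \in A -> y \in A -> reach x y.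
Proof.
move=> hA xA yA; have := yA; rewrite (comp_eq hA xA) scc_in.
by case/and3P.
Qed.

Lemma comp_nonempty A : is_comp A -> exists x, x \in A.
Proof. by case/is_compP => x hx ->; exists x; apply: scc_self. Qed.

Lemma gc_arc_reach A B x y : gc_arc A B -> x \in A -> y \in B -> reach x y.
Proof.
case/and4P => hA hB _ /existsP[x' /andP[x'A /existsP[y' /andP[y'B hxy]]]] xA yB.
apply: (reach_trans (comp_reach hA xA x'A)).
apply: (reach_trans (arc_reach hxy)).
exact: comp_reach hB y'B yB.
Qed.

Definition creach (A B : {set T}) : bool :=
  (B != set0) && [forall x in A, forall y in B, reach x y].

Lemma creach_trans : transitive creach.
Proof.
move=> B A C /andP[hB0 /forallP hAB] /andP[hC0 /forallP hBC].
rewrite /creach hC0 /=; apply/forallP => x; apply/implyP => xA.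
apply/forallP => z; apply/implyP => zC.
case/set0Pn: hB0 => y yB.
move: (hAB x); rewrite xA /= => /forallP /(_ y); rewrite yB /= => hxy.
move: (hBC y); rewrite yB /= => /forallP /(_ z); rewrite zC /= => hyz.
exact: reach_trans hxy hyz.
Qed.

Lemma gc_arc_creach A B : gc_arc A B -> creach A B.
Proof.
move=> h; have := h; case/and4P => _ hB _ _.
rewrite /creach; apply/andP; split.
  by case: (comp_nonempty hB) => y yB; apply/set0Pn; exists y.
apply/forallP => x; apply/implyP => xA; apply/forallP => y; apply/implyP => yB.
exact: gc_arc_reach h xA yB.
Qed.

Lemma gc_path_reach a0 ps i j x y :
  path gc_arc a0 ps -> (i < j)%N -> (j < size (a0 :: ps))%N ->
  x \in nth a0 (a0 :: ps) i -> y \in nth a0 (a0 :: ps) j -> reach x y.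
Proof.
move=> hp hij hj xi yj.
have hs : sorted creach (a0 :: ps) by apply: sub_path hp; exact: gc_arc_creach.
have := sorted_ltn_nth creach_trans a0 hs.
move=> /(_ i j); rewrite !inE => /(_ (ltn_trans hij hj) hj hij).
case/andP => _ /forallP /(_ x); rewrite xi /= => /forallP /(_ y).
by rewrite yj.
Qed.

Lemma walk_bound x p : path arc x p -> (0 < size p)%N ->
  d x (last x p) < (size p)%:R * sigma.
Proof.
elim: p x => [|y p IH] x //= /andP[hxy hp] _.
case: p IH hp => [|z p] IH hp.
  by rewrite mul1r; case/and4P: hxy.
have := IH y hp isT; rewrite [size _]/= => h.
apply: (le_lt_trans (tri x _ y)).
rewrite [(size p).+2%:R]mulrSr mulrDl mul1r addrC.
apply: ltrD => //; by case/and4P: hxy.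
Qed.

Definition cw x q := [/\ path arc x q, last x q = x & (0 < size q)%N].

Lemma cw_size2 x q : cw x q -> (1 < size q)%N.
Proof.
case=> hp hl hs; case: q hp hl hs => [|y [|z q]] // hp hl _.
move: hp; rewrite /= in hl; rewrite hl /= andbT.
by case/and4P => _ _ /eqP.
Qed.

Lemma dcycle_cw c : dcycle d W sigma c -> exists x q, cw x q /\ size q = size c.
Proof.
case/and4P => hs _ _; case: c hs => [|x p] // _ hc.
by exists x, (rcons p x); split; [split; rewrite ?last_rcons ?size_rcons | rewrite size_rcons].
Qed.

Lemma reach2_cw x y : x != y -> reach x y -> reach y x -> exists z q, cw z q.
Proof.
move=> hxy /connectP[p hp ly] /connectP[q hq lx].
exists x, (p ++ q); split.
- by rewrite cat_path hp -ly hq.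
- by rewrite last_cat -ly -lx.
- case: p hp ly {hq lx} => [|u p] /=; last by [].
  by move=> _ hyx; rewrite hyx eqxx in hxy.
Qed.

End Graph.

Lemma nth_rot1 (X : Type) (x0 : X) (c : seq X) i j :
  (j <= i)%N -> (i < size c)%N -> nth x0 (rot j c) (i - j) = nth x0 c i.
Proof.
move=> hji hi; rewrite /rot nth_cat size_drop.
have -> : (i - j < size c - j)%N by rewrite ltn_sub2r // (leq_ltn_trans hji).
by rewrite nth_drop subnKC.
Qed.

Lemma nth_rot2 (X : Type) (x0 : X) (c : seq X) i j :
  (i < j)%N -> (j <= size c)%N -> nth x0 (rot j c) (size c - j + i) = nth x0 c i.
Proof.
move=> hij hj; rewrite /rot nth_cat size_drop ltnNge leq_addr /=.
by rewrite addKn nth_take.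
Qed.

Lemma path_take (X : Type) (e : rel X) x p t : path e x p -> path e x (take t p).
Proof. by rewrite -{1}(cat_take_drop t p) cat_path => /andP[]. Qed.

Lemma path_drop_last (X : Type) (e : rel X) x p t :
  path e x p -> path e (last x (take t p)) (drop t p).
Proof. by rewrite -{1}(cat_take_drop t p) cat_path => /andP[]. Qed.

Section Cyc.
Variables (R : realFieldType) (T : finType) (d : T -> T -> R).
Hypothesis d0 : forall u, d u u = 0.
Hypothesis tri : forall u v w, d u v <= d u w + d w v.
Variables (W : {set T}) (sigma : R).

Local Notation arc := (Defs.arc d W sigma).
Local Notation cw := (cw d W sigma).

Lemma path_allW x p : path arc x p -> all (fun y => y \in W) p.
Proof.
elim: p x => [|y p IH] x //= /andP[hxy hp].
by rewrite (arc_W hxy).2 (IH y hp).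
Qed.

Lemma cycle_cw_sub y r t : cycle arc (y :: r) -> (t < size (y :: r))%N ->
  arc (nth y (y :: r) t) y -> cw y (rcons (take t r) y).
Proof.
rewrite /= rcons_path => /andP[hp _] ht ha; split.
- by rewrite rcons_path path_take //= last_take.
- by rewrite last_rcons.
- by rewrite size_rcons.
Qed.

Lemma ex_cw_min : (exists x q, cw x q) ->
  exists x q, cw x q /\ forall y q', cw y q' -> (size q <= size q')%N.
Proof.
case=> x [q hq].
pose P m := exists y q', cw y q' /\ size q' = m.
have h0 : P (size q) by exists x, q.
have [m [[y [q' [hq' hm]]] hmin]] := ex_min_nat h0.
exists y, q'; split => // z q'' hz; rewrite hm; apply: hmin; by exists z, q''.
Qed.

Lemma min_cw_dcycle x q : cw x q -> (forall y q', cw y q' -> (size q <= size q')%N) ->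
  exists c, [/\ dcycle d W sigma c, chordless d W sigma c & size c = size q].
Proof.
move=> hcw hmin; have h2 := cw_size2 hcw.
case: hcw => hp hl hs.
case/lastP: q hp hl hs hmin h2 => [|p0 z] // hp hl _ hmin h2.
rewrite last_rcons in hl; subst z.
have hc : cycle arc (x :: p0) by [].
exists (x :: p0); split; last by rewrite size_rcons.
- rewrite /dcycle hc andbT; apply/and3P; split.
  + by rewrite size_rcons in h2.
  + apply/negPn/negP => hnu.
    have hp0 : path arc x p0 by move: hp; rewrite rcons_path => /andP[].
    case: (nonuniq_cw hp0 hnu) => z [q' [h1 h2' h3 h4]].
    have := hmin z q' (And3 h1 h2' h3).
    by rewrite size_rcons ltnNge h4.
  + have := path_allW hp; rewrite all_rcons => /andP[hx hall].
    by rewrite /= hx.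
- move=> x0 i j hi hj ha.
  set c := x :: p0 in hi hj ha hc.
  have hij : i != j.
    by apply/eqP => eij; move: ha; rewrite eij arcP eqxx /= !andbF.
  have sc : size c = size (rcons p0 x) by rewrite size_rcons.
  case: (ltngtP i j) hij => // hij _.
  +
    have hrc : cycle arc (rot j c) by rewrite rot_cycle.
    have hj0 : nth x0 (rot j c) 0 = nth x0 c j by rewrite -(subnn j) nth_rot1.
    case erc : (rot j c) => [|y r]; first by move: hj; rewrite -(size_rot j) erc.
    rewrite erc /= in hj0.
    have ht : (size c - j + i < size (y :: r))%N.
      rewrite -erc size_rot; lia.
    have hnt : nth y (y :: r) (size c - j + i) = nth x0 c i.
      rewrite -erc (set_nth_default x0); last by rewrite size_rot; lia.
      by rewrite nth_rot2 // ltnW.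
    have hrc' : cycle arc (y :: r) by rewrite -erc.
    have := cycle_cw_sub hrc' ht.
    rewrite hnt hj0 => /(_ ha) hcw'.
    have := hmin _ _ hcw'.
    have sr : size r = (size c).-1 by rewrite -[r]/(behead (y::r)) size_behead -erc size_rot.
    have sc' : size c = (size p0).+1 by [].
    rewrite !size_rcons size_take sr => hle.
    have eji : j = i.+1 by clearbody c; move: hle; case: ifP => hif; lia.
    by rewrite -/c modn_small // -eji.
  + have hrc : cycle arc (rot j c) by rewrite rot_cycle.
    have hj0 : nth x0 (rot j c) 0 = nth x0 c j by rewrite -(subnn j) nth_rot1 // ltnW.
    case erc : (rot j c) => [|y r]; first by move: hj; rewrite -(size_rot j) erc.
    rewrite erc /= in hj0.
    have ht : (i - j < size (y :: r))%N by rewrite -erc size_rot; lia.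
    have hnt : nth y (y :: r) (i - j) = nth x0 c i.
      rewrite -erc (set_nth_default x0); last by rewrite size_rot; lia.
      by rewrite nth_rot1 // ltnW.
    have hrc' : cycle arc (y :: r) by rewrite -erc.
    have := cycle_cw_sub hrc' ht.
    rewrite hnt hj0 => /(_ ha) hcw'.
    have := hmin _ _ hcw'.
    have sr : size r = (size c).-1 by rewrite -[r]/(behead (y::r)) size_behead -erc size_rot.
    have sc' : size c = (size p0).+1 by [].
    rewrite !size_rcons size_take sr => hle.
    have eij : i = size p0 /\ j = 0%N by move: hle; case: ifP => hif; lia.
    case: eij => -> ->.
    by rewrite -/c -sc' modnn.
Qed.

Lemma cw_dcycle_ex : (exists x q, cw x q) ->
  exists c, dcycle d W sigma c /\ chordless d W sigma c.
Proof.
case/ex_cw_min => x [q [hq hmin]].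
by case: (min_cw_dcycle hq hmin) => c [h1 h2 _]; exists c.
Qed.
End Cyc.

Lemma count_even_iota b n :
  count (fun i => ~~ odd i) (iota b n) = if odd b then n./2 else uphalf n.
Proof.
elim: n b => [|n IH] b; first by case: (odd b).
rewrite /= IH /=; case: (odd b) => /=; by rewrite ?uphalfE ?add0n ?add1n.
Qed.

Lemma size_odd_index (X : Type) (s : seq X) : size (odd_index s) = uphalf (size s).
Proof.
rewrite /odd_index size_mask ?size_map ?size_iota // count_map.
by rewrite count_even_iota.
Qed.

Lemma mem_mask_iota (X : eqType) (x0 : X) b (s : seq X) y :
  y \in mask [seq ~~ odd i | i <- iota b (size s)] s ->
  exists2 i, (i < size s)%N & ~~ odd (b + i) /\ y = nth x0 s i.
Proof.
elim: s b => [|z s IH] b //=.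
case: ifP => hb.
  rewrite inE => /orP[/eqP -> | hy]; first by exists 0%N; rewrite ?addn0.
  case: (IH b.+1 hy) => i hi [ho ->]; exists i.+1 => //; by rewrite addnS -addSn.
move=> hy; case: (IH b.+1 hy) => i hi [ho ->]; exists i.+1 => //; by rewrite addnS -addSn.
Qed.

Lemma mem_odd_index (X : eqType) (x0 : X) (s : seq X) y :
  y \in odd_index s -> exists2 i, (i < size s)%N & ~~ odd i /\ y = nth x0 s i.
Proof. exact: mem_mask_iota. Qed.

Lemma odd_index_sub (X : eqType) (s : seq X) y : y \in odd_index s -> y \in s.
Proof. exact: mem_mask. Qed.

Lemma odd_index_uniq (X : eqType) (s : seq X) : uniq s -> uniq (odd_index s).
Proof. by move=> h; apply: mask_uniq. Qed.

Section Long.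
Variables (R : realFieldType) (T : finType) (d : T -> T -> R).
Hypothesis d0 : forall u, d u u = 0.
Hypothesis tri : forall u v w, d u v <= d u w + d w v.
Variables (W : {set T}) (sigma : R) (kk : nat).
Hypothesis sig0 : 0 < sigma.
Hypothesis Hsep : forall x y, x \in W -> y \in W -> x != y ->
  (2 * kk)%N%:R * sigma <= dmax d x y.

Local Notation arc := (Defs.arc d W sigma).

Lemma dcycle_long c : dcycle d W sigma c -> (2 * kk + 2 <= size c)%N.
Proof.
case/and4P => hs hu hW hc.
case: c hs hu hW hc => [|x [|y p]] //= _ /andP[hx _] _ /andP[hxy hp].
have hl : path arc y (rcons p x) by [].
have := walk_bound tri hl; rewrite size_rcons last_rcons => /(_ isT) hyx.
have [xW [yW [nxy dxy]]] : [/\ x \in W, y \in W, x != y & d x y < sigma].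
  by case/and4P: hxy.
have := Hsep xW yW nxy; rewrite /dmax.
have h1 : d x y < (size p).+1%:R * sigma.
  by apply: lt_le_trans dxy _; rewrite ler_pMl // ler1n.
move=> h; have : (2 * kk)%N%:R * sigma < (size p).+1%:R * sigma.
  by apply: le_lt_trans h _; rewrite gt_max h1 hyx.
rewrite ltr_pM2r // ltr_nat => hlt.
by rewrite -addn2 addnC; lia.
Qed.
End Long.

Section Greedy.
Variables (R : realFieldType) (T : finType) (d : T -> T -> R).

Lemma dmin_le1 u v : dmin d u v <= d u v.
Proof. by rewrite /dmin ge_min lexx. Qed.
Lemma dmin_le2 u v : dmin d u v <= d v u.
Proof. by rewrite /dmin ge_min lexx orbT. Qed.
Lemma dmin_ge z u v : z <= d u v -> z <= d v u -> z <= dmin d u v.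
Proof. by move=> h1 h2; rewrite /dmin le_min h1 h2. Qed.

Lemma foldr_min_le y (p : seq T) e z : z \in p ->
  foldr (fun t acc => Num.min (dmin d y t) acc) e p <= dmin d y z.
Proof.
elim: p => [|t p IH] //=; rewrite inE => /orP[/eqP -> | hz].
  by rewrite ge_min lexx.
by rewrite ge_min (IH hz) orbT.
Qed.

Lemma foldr_min_ge y (p : seq T) e z : z <= e -> (forall t, t \in p -> z <= dmin d y t) ->
  z <= foldr (fun t acc => Num.min (dmin d y t) acc) e p.
Proof.
move=> he; elim: p => [|t p IH] //= h.
rewrite le_min h ?inE ?eqxx //= IH // => u hu; apply: h; by rewrite inE hu orbT.
Qed.

Lemma dist_to_le y p z : z \in p -> dist_to d y p <= dmin d y z.
Proof. exact: foldr_min_le. Qed.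

Lemma dist_to_ge y p z : p != [::] -> (forall t, t \in p -> z <= dmin d y t) ->
  z <= dist_to d y p.
Proof.
move=> hp h; apply: foldr_min_ge => //; apply: h.
by case: p hp => //= t p _; rewrite inE eqxx.
Qed.

Lemma greedy_sub k I s x : greedy d k I s -> x \in s -> x \in I.
Proof. by case=> _ _ h _; apply: h. Qed.

Lemma greedy_helper k I s sigma u v :
  greedy d k I s -> (k < #|I|)%N -> u \in s -> v \in s ->
  (index u s < index v s)%N -> dmin d v u < sigma ->
  (forall y, y \in I -> y != u -> y != v -> forall t, t \in I -> t != y -> sigma <= dmin d y t) ->
  False.
Proof.
move=> hg hkI us vs huv hvu hgood.
have hg' := hg; case: hg' => hsz hu hsub hgr.
set j := index v s.
have hj : (j < k)%N by rewrite -hsz index_mem.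
have hj0 : (0 < j)%N by apply: leq_ltn_trans huv.
have nv : nth v s j = v by rewrite nth_index.
have hjs : (j < size s)%N by rewrite index_mem.
have ut : u \in take j s.
  rewrite -(nth_index v us) -(nth_take v huv); apply: mem_nth; by rewrite size_take hjs.
have : [exists y in I, (y \notin take j s) && (y != v)].
  case: (boolP [exists y in I, (y \notin take j s) && (y != v)]) => // /existsPn hno; exfalso.
  have sub : I \subset v |: [set t in take j s].
    apply/subsetP => y yI; move: (hno y); rewrite yI /= negb_and !negbK !inE.
    by case/orP => ->; rewrite ?orbT.
  have h2 := subset_leq_card sub; rewrite cardsU1 in h2.
  have h1 : (#|[set t in take j s]| <= j)%N.
    by rewrite cardsE; apply: leq_trans (card_size _) _; rewrite size_take hjs.
  have hb : ((v \notin [set t in take j s]) <= 1)%N by case: (_ \notin _).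
  lia.
case/existsP => y /andP[yI /andP[yt yv]].
have yu : y != u by apply: contraNneq yt => ->.
have h1 := hgr v j (introT andP (conj hj0 hj)) y yI yt; rewrite nv in h1.
have h2 : sigma <= dist_to d y (take j s).
  apply: dist_to_ge; first by apply/eqP => e; rewrite e in ut.
  move=> t tt; apply: (hgood y yI yu yv t); first by apply: hsub; apply: mem_take tt.
  by apply: contraNneq yt => <-.
have h3 := dist_to_le v ut.
have : sigma < sigma by apply: le_lt_trans h2 (le_lt_trans h1 (le_lt_trans h3 hvu)).
by rewrite ltxx.
Qed.

Lemma greedy_good k I s sigma a b :
  greedy d k I s ->
  (forall x y, x \in I -> y \in I -> x != y -> ~~ ((x == a) && (y == b)) -> sigma <= d x y) ->
  (a == b) || (k < #|I|)%N ->
  forall x y, x \in s -> y \in s -> x != y -> sigma <= d x y.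
Proof.
move=> hg hgood hab x y xs ys xy.
have xI := greedy_sub hg xs; have yI := greedy_sub hg ys.
case: (boolP ((x == a) && (y == b))) => hxy; last exact: hgood.
case/andP: hxy => /eqP ea /eqP eb; subst a b.
rewrite (negbTE xy) /= in hab.
case: (lerP sigma (d x y)) => // hlt; exfalso.
have good2 : forall z, z \in I -> z != x -> z != y -> forall t, t \in I -> t != z -> sigma <= dmin d z t.
  move=> z zI zx zy t tI tz; apply: dmin_ge.
    by apply: hgood => //; [rewrite eq_sym | rewrite (negbTE zx)].
  by apply: hgood => //; rewrite (negbTE zy) andbF.
have hne : index x s != index y s.
  by apply: contra xy => /eqP e; rewrite -(nth_index x xs) e nth_index.
case: (ltngtP (index x s) (index y s)) hne => // hi _.
- apply: (greedy_helper hg hab xs ys hi) => //.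
    by apply: le_lt_trans (dmin_le2 _ _) hlt.
  move=> z zI zy zx; exact: good2.
- apply: (greedy_helper hg hab ys xs hi) => //.
    by apply: le_lt_trans (dmin_le1 _ _) hlt.
  move=> z zI zx zy; exact: good2.
Qed.

Lemma greedy_ex k (I : {set T}) : (k <= #|I|)%N -> exists s, greedy d k I s.
Proof.
move=> hk.
suff : forall n, (n <= k)%N -> exists s, [/\ size s = n, uniq s, (forall x, x \in s -> x \in I) &
      forall (x0 : T) j, (0 < j < n)%N ->
        forall y, y \in I -> y \notin take j s ->
          dist_to d y (take j s) <= dist_to d (nth x0 s j) (take j s)].
  by case/(_ k (leqnn k)) => s [h1 h2 h3 h4]; exists s; split.
elim=> [|n IH] hn; first by exists [::]; split => // x0 j /andP[h1 h2]; lia.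
case: (IH (ltnW hn)) => s [h1 h2 h3 h4].
have : exists y, y \in I /\ y \notin s.
  case: (boolP [exists y, (y \in I) && (y \notin s)]) => [/existsP[y /andP[h h']] | /existsPn hno].
    by exists y.
  exfalso.
  have sub : I \subset [set t in s].
    by apply/subsetP => y yI; move: (hno y); rewrite yI /= negbK inE.
  have hc := subset_leq_card sub; rewrite cardsE in hc.
  have := leq_trans hc (card_size s); rewrite h1; lia.
case=> y0 hy0.
case: (@ex_argmax _ _ (fun y => y \in I /\ y \notin s) (fun y => dist_to d y s) y0 hy0) => y [[yI ys] hmax].
exists (rcons s y); split.
- by rewrite size_rcons h1.
- by rewrite rcons_uniq ys h2.
- by move=> x; rewrite mem_rcons inE => /orP[/eqP -> // | /h3].
- move=> x0 j /andP[hj0 hjn] z zI zt.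
  have tk : take j (rcons s y) = take j s.
    by rewrite -cats1 takel_cat // h1; lia.
  rewrite tk in zt *; rewrite nth_rcons h1.
  case: ltnP => hjs.
    by apply: h4 => //; rewrite hj0.
  have ejn : j = n by lia.
  rewrite ejn eqxx -h1 take_size; rewrite ejn -h1 take_size in zt.
  by apply: hmax.
Qed.
End Greedy.

Lemma last_indep (X : eqType) (y z : X) (q : seq X) : q != [::] -> last y q = last z q.
Proof. by case: q. Qed.

Lemma even_gap i j : (i < j)%N -> ~~ odd i -> ~~ odd j -> (i.+1 < j)%N.
Proof.
move=> hij hi hj; rewrite ltn_neqAle hij andbT.
by apply/eqP => e; move: hj; rewrite -e oddS hi.
Qed.

Section Opes.
Variable T : finType.

Definition opick (x0 : T) (A : {set T}) : T := odflt x0 [pick x in A].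

Lemma opick_in (x0 : T) (A : {set T}) : A != set0 -> opick x0 A \in A.
Proof.
move=> hA; rewrite /opick; case: pickP => [x hx | h] //=.
by case/set0Pn: hA => x hx; move: (h x); rewrite hx.
Qed.

Lemma ope_mem (F : seq {set T}) I x :
  one_point_each F I -> x \in I -> exists2 A, A \in F & x \in A.
Proof. by case=> h _; apply: h. Qed.

Lemma ope_uniq (F : seq {set T}) I A x y :
  one_point_each F I -> A \in F -> x \in I -> y \in I -> x \in A -> y \in A -> x = y.
Proof.
case=> _ h hA xI yI xA yA.
have := h A hA => /eqP /cards1P [z hz].
have : x \in I :&: A by rewrite inE xI xA.
have : y \in I :&: A by rewrite inE yI yA.
by rewrite hz !inE => /eqP -> /eqP ->.
Qed.

Lemma ope_card (x0 : T) (F : seq {set T}) I :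
  one_point_each F I ->
  (forall A B x, A \in F -> B \in F -> x \in A -> x \in B -> A = B) ->
  (#|[set A in F]| <= #|I|)%N.
Proof.
move=> hI hdis.
have hne : forall A, A \in F -> exists2 x, x \in I & x \in A.
  move=> A hA; case: hI => _ /(_ A hA) h1.
  have : (0 < #|I :&: A|)%N by rewrite h1.
  by case/card_gt0P => x; rewrite inE => /andP[]; exists x.
pose f A := opick x0 (I :&: A).
have fin : forall A, A \in F -> f A \in I :&: A.
  move=> A hA; apply: opick_in; case: (hne A hA) => x h1 h2.
  by apply/set0Pn; exists x; rewrite inE h1 h2.
have inj : {in [set A in F] &, injective f}.
  move=> A B; rewrite !inE => hA hB e.
  have := fin A hA; have := fin B hB; rewrite -e !inE => /andP[_ h1] /andP[_ h2].
  exact: hdis h2 h1.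
rewrite -(card_in_imset inj); apply: subset_leq_card; apply/subsetP => x.
case/imsetP => A; rewrite inE => hA ->.
by have := fin A hA; rewrite inE => /andP[].
Qed.

Lemma ope_ex (x0 : T) (F : seq {set T}) :
  (forall A, A \in F -> A != set0) ->
  (forall A B x, A \in F -> B \in F -> x \in A -> x \in B -> A = B) ->
  exists I, one_point_each F I.
Proof.
move=> hne hdis; exists [set opick x0 A | A in [set A in F]]; split.
  move=> x /imsetP[A]; rewrite inE => hA ->; exists A => //; exact: opick_in (hne A hA).
move=> A hA; apply/eqP/cards1P; exists (opick x0 A); apply/setP => y.
rewrite !inE; apply/andP/eqP => [[/imsetP[B]] | ->].
  rewrite inE => hB -> hBA; have := opick_in x0 (hne B hB) => hBB.
  by rewrite (hdis _ _ _ hA hB hBA hBB).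
split; last exact: opick_in (hne A hA).
by apply/imsetP; exists A; rewrite ?inE.
Qed.
End Opes.

Section Paths.
Variables (R : realFieldType) (T : finType) (d : T -> T -> R).
Hypothesis d0 : forall u, d u u = 0.
Hypothesis tri : forall u v w, d u v <= d u w + d w v.
Variables (W : {set T}) (sigma : R).

Local Notation arc := (Defs.arc d W sigma).
Local Notation reach := (Defs.reach d W sigma).
Local Notation scc := (Defs.scc d W sigma).
Local Notation is_comp := (Defs.is_comp d W sigma).
Local Notation gc_arc := (Defs.gc_arc d W sigma).
Local Notation gc_path := (Defs.gc_path d W sigma).
Local Notation shortest := (Defs.shortest_gc_path d W sigma).
Local Notation cw := (cw d W sigma).

Lemma gc_path_comps a0 ps : gc_path a0 ps -> forall A, A \in a0 :: ps -> is_comp A.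
Proof.
case/andP; elim: ps a0 => [|B ps IH] a0 h0 /=.
  by move=> _ A; rewrite inE => /eqP ->.
case/andP => hab hp A; rewrite inE => /orP[/eqP -> // | hA].
have hB : is_comp B by case/and4P: hab.
exact: IH hB hp A hA.
Qed.

Lemma shortest_uniq a0 ps : shortest a0 ps -> uniq (a0 :: ps).
Proof.
case=> /andP[h0 hp] hmin; apply/negPn/negP => hnu.
case: (nonuniq_short hp hnu) => p' [h1 h2 h3].
have := hmin p'; rewrite /Defs.gc_path h0 h1 => /(_ isT h2).
by rewrite leqNgt h3.
Qed.

Lemma shortest_bound a0 ps : shortest a0 ps -> (size ps < #|{set T}|)%N.
Proof.
move/shortest_uniq => /card_uniqP h; have := max_card (mem (a0 :: ps)).
by rewrite h.
Qed.

Lemma shortest_prefix a0 ps n : shortest a0 ps -> shortest a0 (take n ps).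
Proof.
case=> /andP[h0 hp] hmin; split; first by rewrite /Defs.gc_path h0 path_take.
move=> qs /andP[_ hq] hl.
have hp2 := path_drop_last n hp.
have := hmin (qs ++ drop n ps); rewrite /Defs.gc_path h0 cat_path hq hl hp2.
rewrite last_cat hl -last_cat cat_take_drop => /(_ isT erefl).
rewrite size_cat size_drop size_take; case: ltnP => h; lia.
Qed.

Lemma shortcut a0 ps i j : shortest a0 ps -> (i.+1 < j)%N -> (j < size (a0 :: ps))%N ->
  gc_arc (nth a0 (a0 :: ps) i) (nth a0 (a0 :: ps) j) -> False.
Proof.
case=> /andP[h0 hp] hmin hij hj ha.
have hjp : (j <= size ps)%N by [].
set q := take i ps ++ drop j.-1 ps.
have hdrop : drop j.-1 ps = nth a0 (a0 :: ps) j :: drop j ps.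
  rewrite (drop_nth a0); last by lia.
  by case: j hij {hj hjp ha q} => // j _; rewrite /= prednK.
have hli : last a0 (take i ps) = nth a0 (a0 :: ps) i by rewrite last_take //; lia.
have hlj : last a0 (take j ps) = nth a0 (a0 :: ps) j by rewrite last_take.
have hq : path gc_arc a0 q.
  rewrite cat_path path_take //= hli hdrop /= ha -hlj.
  exact: path_drop_last.
have hlq : last a0 q = last a0 ps.
  rewrite last_cat (@last_indep _ _ (last a0 (take j.-1 ps))); last by rewrite hdrop.
  by rewrite -last_cat cat_take_drop.
have := hmin q; rewrite /Defs.gc_path h0 hq => /(_ isT hlq).
rewrite size_cat size_drop size_take; case: ltnP => h; lia.
Qed.

Section Dag.
Hypothesis nocw : ~ exists x q, cw x q.

Lemma dag_scc x : x \in W -> scc x = [set x].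
Proof.
move=> hx; apply/setP => y; rewrite scc_in inE.
case: (boolP (y == x)) => [/eqP -> | hyx]; first by rewrite hx !reach_refl.
apply/negP => /and3P[_ h1 h2]; apply: nocw.
have hxy : x != y by rewrite eq_sym.
exact: reach2_cw hxy h1 h2.
Qed.

Lemma dag_comp A : is_comp A -> exists2 x, x \in W & A = [set x].
Proof. by case/is_compP => x hx ->; exists x; rewrite ?dag_scc. Qed.

Lemma dag_gc_arc x y : gc_arc [set x] [set y] -> arc x y.
Proof.
case/and4P => _ _ _ /existsP[x' /andP[]]; rewrite inE => /eqP -> /existsP[y' /andP[]].
by rewrite inE => /eqP ->.
Qed.

Lemma dag_path a0 ps : gc_path a0 ps ->
  exists x p, [/\ a0 = [set x], path arc x p, size p = size ps & last a0 ps = [set last x p]].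
Proof.
case/andP; elim: ps a0 => [|B ps IH] a0 h0 /=.
  by case: (dag_comp h0) => x _ ->; exists x, [::].
case/andP => hab hp.
have hB : is_comp B by case/and4P: hab.
case: (IH B hB hp) => y [p [eB h1 h2 h3]].
case: (dag_comp h0) => x _ ea; subst a0 B.
exists x, (y :: p); split => //=; first by rewrite h1 dag_gc_arc.
by rewrite h2.
Qed.

Lemma arc_gc x y : arc x y -> gc_arc (scc x) (scc y).
Proof.
move=> h; have [hx hy] := arc_W h.
rewrite /Defs.gc_arc; apply/and4P; split.
- by apply/is_compP; exists x.
- by apply/is_compP; exists y.
- rewrite !dag_scc //; apply: contraTneq h => /setP /(_ x); rewrite !inE eqxx => /esym/eqP ->.
  by rewrite arcP eqxx !andbF.
- by apply/existsP; exists x; rewrite scc_self //=; apply/existsP; exists y; rewrite scc_self.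
Qed.

Lemma dag_gc_of_path x p : x \in W -> path arc x p ->
  gc_path (scc x) [seq scc y | y <- p] /\ last (scc x) [seq scc y | y <- p] = scc (last x p).
Proof.
move=> hx hp; split; last by rewrite last_map.
rewrite /Defs.gc_path; apply/andP; split; first by apply/is_compP; exists x.
elim: p x hx hp => [|y p IH] x hx //= /andP[hxy hp].
by rewrite arc_gc //= IH // (arc_W hxy).2.
Qed.

End Dag.
End Paths.

Lemma uphalf_ge m n : (2 * m <= n.+1)%N -> (m <= uphalf n)%N.
Proof.
move=> h; rewrite uphalfE; have := half_leq h.
by rewrite mulnC muln2 half_double.
Qed.

Section Main.
Variables (R : realFieldType) (T : finType) (d : T -> T -> R).
Hypothesis d0 : forall u, d u u = 0.
Hypothesis tri : forall u v w, d u v <= d u w + d w v.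
Variables (W : {set T}) (sigma : R) (k : nat).

Local Notation arc := (Defs.arc d W sigma).
Local Notation reach := (Defs.reach d W sigma).
Local Notation scc := (Defs.scc d W sigma).
Local Notation is_comp := (Defs.is_comp d W sigma).
Local Notation gc_arc := (Defs.gc_arc d W sigma).
Local Notation gc_path := (Defs.gc_path d W sigma).
Local Notation shortest := (Defs.shortest_gc_path d W sigma).
Local Notation cw := (cw d W sigma).

Lemma good_cycle c : dcycle d W sigma c -> chordless d W sigma c ->
  forall x0, let I := [set x in odd_index c] in
  #|I| = uphalf (size c) /\
  forall x y, x \in I -> y \in I -> x != y ->
    ~~ ((x == nth x0 c (size c).-1) && (y == nth x0 c 0)) -> sigma <= d x y.
Proof.
move=> hc hch x0 I; have := hc; case/and4P => hs hu hW _.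
split.
  rewrite /I cardsE; have /card_uniqP -> := odd_index_uniq hu.
  exact: size_odd_index.
move=> x y; rewrite !inE => xI yI xy hab.
have xc := odd_index_sub xI; have yc := odd_index_sub yI.
have xW : x \in W by move/allP: hW; apply.
have yW : y \in W by move/allP: hW; apply.
apply: (@noarc_ge _ _ d W sigma) => //; apply/negP => ha.
case: (mem_odd_index x0 xI) => i hi [oi ex].
case: (mem_odd_index x0 yI) => j hj [oj ey].
rewrite ex ey in ha.
have := hch x0 i j hi hj ha.
case: (ltnP i.+1 (size c)) => hi1.
  by rewrite modn_small // => ej; move: oj; rewrite ej oddS oi.
have ei1 : i.+1 = size c by apply/eqP; rewrite eqn_leq hi hi1.
rewrite ei1 modnn => ej; move: hab; by rewrite ex ey -ei1 /= ej !eqxx.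
Qed.

Lemma good_anti M I : antichain d W sigma M -> one_point_each (enum M) I ->
  (forall x y, x \in I -> y \in I -> x != y -> sigma <= d x y) /\
  (forall x0 : T, (#|M| <= #|I|)%N).
Proof.
case=> hM1 hM2 hI.
have hdis : forall A B x, A \in enum M -> B \in enum M -> x \in A -> x \in B -> A = B.
  move=> A B x; rewrite !mem_enum => hA hB xA xB.
  case: (eqVneq A B) => // nAB.
  by have := hM2 A B hA hB nAB x x xA xB; rewrite reach_refl.
split.
  move=> x y xI yI xy.
  case: (ope_mem hI xI) => A; rewrite mem_enum => hA xA.
  case: (ope_mem hI yI) => B; rewrite mem_enum => hB yB.
  case: (eqVneq A B) => eAB.
    subst B; have := ope_uniq hI (A := A) _ xI yI xA yB.
    by rewrite mem_enum => /(_ hA) e; rewrite e eqxx in xy.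
  have nr := hM2 A B hA hB eAB x y xA yB.
  apply: (@noarc_ge _ _ d W sigma) => //; [exact: comp_sub (hM1 A hA) xA | exact: comp_sub (hM1 B hB) yB |].
  by apply: contra nr; apply: arc_reach.
move=> x0; have := ope_card x0 hI hdis.
have -> : [set A in enum M] = M by apply/setP => A; rewrite inE mem_enum.
done.
Qed.

Lemma good_path a0 ps I : shortest a0 ps -> one_point_each (odd_index (a0 :: ps)) I ->
  (forall x y, x \in I -> y \in I -> x != y -> sigma <= d x y) /\
  (forall x0 : T, (uphalf (size ps).+1 <= #|I|)%N).
Proof.
move=> hsh hI; have hsh' := hsh; case: hsh' => hgp hmin.
have hu := shortest_uniq hsh.
have hcomp := gc_path_comps hgp.
have hFc : forall A, A \in odd_index (a0 :: ps) -> is_comp A.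
  by move=> A /odd_index_sub; apply: hcomp.
have hdis : forall A B x, A \in odd_index (a0 :: ps) -> B \in odd_index (a0 :: ps) ->
    x \in A -> x \in B -> A = B.
  by move=> A B x hA hB; apply: comp_disj; apply: hFc.
split.
  move=> x y xI yI xy.
  case: (ope_mem hI xI) => A hA xA.
  case: (ope_mem hI yI) => B hB yB.
  have xW := comp_sub (hFc A hA) xA; have yW := comp_sub (hFc B hB) yB.
  case: (eqVneq A B) => eAB.
    by subst B; rewrite (ope_uniq hI hA xI yI xA yB) eqxx in xy.
  apply: (@noarc_ge _ _ d W sigma) => //; apply/negP => ha.
  case: (mem_odd_index a0 hA) => i hi [oi ei].
  case: (mem_odd_index a0 hB) => j hj [oj ej].
  case: (ltngtP i j) => hij.
  - apply: (shortcut hsh (even_gap hij oi oj) hj).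
    rewrite -ei -ej; apply/and4P; split; [exact: hFc | exact: hFc | exact: eAB |].
    by apply/existsP; exists x; rewrite xA /=; apply/existsP; exists y; rewrite yB.
  - case/andP: hgp => _ hp.
    have yB' : y \in nth a0 (a0 :: ps) j by rewrite -ej.
    have xA' : x \in nth a0 (a0 :: ps) i by rewrite -ei.
    have hyx := gc_path_reach hp hij hi yB' xA'.
    have hxy := arc_reach ha.
    have : y \in scc x by rewrite scc_in yW hxy hyx.
    rewrite -(comp_eq (hFc A hA) xA) => yA.
    by move: eAB; rewrite (hdis A B y hA hB yA yB) eqxx.
  - by move: eAB; rewrite ei ej hij eqxx.
move=> x0; have := ope_card x0 hI hdis.
rewrite cardsE; have /card_uniqP -> := odd_index_uniq hu.
by rewrite size_odd_index.
Qed.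
End Main.

Section Main2.
Variables (R : realFieldType) (T : finType) (d : T -> T -> R).
Hypothesis d0 : forall u, d u u = 0.
Hypothesis tri : forall u v w, d u v <= d u w + d w v.
Variables (W : {set T}) (sigma : R) (k : nat).
Hypothesis sig0 : 0 < sigma.
Hypothesis hk : (2 <= k)%N.
Hypothesis Hsep : forall x y, x \in W -> y \in W -> x != y ->
  (2 * k)%N%:R * sigma <= dmax d x y.
Variable Cs : {set T}.
Hypothesis hCW : Cs \subset W.
Hypothesis hCk : #|Cs| = k.
Hypothesis HC : forall x y, x \in Cs -> y \in Cs -> x != y -> (2 * k)%N%:R * sigma <= d x y.

Local Notation arc := (Defs.arc d W sigma).
Local Notation reach := (Defs.reach d W sigma).
Local Notation scc := (Defs.scc d W sigma).
Local Notation is_comp := (Defs.is_comp d W sigma).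
Local Notation gc_arc := (Defs.gc_arc d W sigma).
Local Notation gc_path := (Defs.gc_path d W sigma).
Local Notation shortest := (Defs.shortest_gc_path d W sigma).
Local Notation cw := (cw d W sigma).

Lemma L2k x y : ~ (exists z q, cw z q) -> x \in Cs -> y \in Cs -> x != y -> reach x y ->
  forall a0 ps, L_choice d W sigma k a0 ps -> size ps = (2 * k).-1.
Proof.
move=> nocw xC yC xy /connectP[p hp ey] a0 ps [hsh hL].
have xW : x \in W by apply: (subsetP hCW).
have yW : y \in W by apply: (subsetP hCW).
have [hg0 hl0] := dag_gc_of_path nocw xW hp.
pose P n := exists qs, [/\ gc_path (scc x) qs, last (scc x) qs = scc y & size qs = n].
have P0 : P (size [seq scc y | y <- p]) by exists [seq scc y | y <- p]; rewrite hl0 -ey.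
case: (ex_min_nat P0) => m [[qs [hq1 hq2 hq3]] hmin].
have hshq : shortest (scc x) qs.
  split => // qs' hq' hl'; rewrite hq3; apply: hmin; exists qs'; split => //.
  by rewrite hl' hq2.
case: (dag_path nocw hq1) => x' [p' [ex' hp' hs' hl']].
have ex'' : x' = x by apply/set1_inj; rewrite -ex' dag_scc.
subst x'.
have ly : last x p' = y.
  by apply/set1_inj; rewrite -hl' hq2 dag_scc.
have hsz : (0 < size p')%N.
  by case: p' hp' hs' hl' ly => //= _ _ _ ey'; rewrite ey' eqxx in xy.
have hwb := walk_bound tri hp' hsz; rewrite ly in hwb.
have := le_lt_trans (HC xC yC xy) hwb; rewrite ltr_pM2r // ltr_nat => hlt.
have hsh2 := shortest_prefix (2 * k).-1 hshq.
have sz2 : size (take (2 * k).-1 qs) = (2 * k).-1.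
  by rewrite size_take; case: ifP => //; lia.
case: hL => // [[hno _]].
by case: (hno _ _ hsh2).
Qed.

Lemma Anti M : ~ (exists z q, cw z q) ->
  ~ (exists x y, [/\ x \in Cs, y \in Cs, x != y & reach x y]) ->
  max_antichain d W sigma M -> (k <= #|M|)%N.
Proof.
move=> nocw nr [_ hmax].
pose D := [set scc x | x in Cs].
have hinj : {in Cs &, injective scc}.
  move=> x y xC yC; rewrite !dag_scc ?(subsetP hCW) //; exact: set1_inj.
have hD : #|D| = k by rewrite card_in_imset.
rewrite -hD; apply: hmax; split.
  move=> A /imsetP[x xC ->]; apply/is_compP; exists x => //; exact: (subsetP hCW).
move=> A B /imsetP[x xC ->] /imsetP[y yC ->] nAB u v.
rewrite !dag_scc ?(subsetP hCW) // !inE => /eqP -> /eqP ->.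
apply/negP => hr; apply: nr; exists x, y; split => //.
by apply: contraNneq nAB => ->.
Qed.


Lemma exC0 : exists x0 : T, x0 \in Cs.
Proof.
have : (0 < #|Cs|)%N by rewrite hCk; lia.
by case/card_gt0P => x hx; exists x.
Qed.

Lemma I_good I : I_choice d W sigma k I ->
  (k <= #|I|)%N /\ exists a b,
    (forall x y, x \in I -> y \in I -> x != y -> ~~ ((x == a) && (y == b)) -> sigma <= d x y) /\
    ((a == b) || (k < #|I|)%N).
Proof.
case=> M [a0 [ps [copt [hM hL hc1 hc2 hcase]]]].
case: exC0 => x0 _.
have hM' := hM; case: hM' => hanti _.
case: hL => hsh hL.
move: hcase => /=.
set sizeL := (size ps).+1.
set sizeM2 := (2 * #|M|).-1.
have nob : (forall x y, x \in I -> y \in I -> x != y -> sigma <= d x y) ->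
    (k <= #|I|)%N -> (k <= #|I|)%N /\ exists a b,
    (forall x y, x \in I -> y \in I -> x != y -> ~~ ((x == a) && (y == b)) -> sigma <= d x y) /\
    ((a == b) || (k < #|I|)%N).
  move=> hg hkI; split => //; exists x0, x0; split; last by rewrite eqxx.
  by move=> x y xI yI xy _; apply: hg.
case ec: copt => [c|].
  have [hdc hch] := hc2 c ec.
  have hlong := dcycle_long tri sig0 Hsep hdc.
  case=> [[c' [ec' h1 h2 ->]] | [[nuse h1 h2]|[nuse h1 h2]]].
  - move: ec' => -[<-].
    have [hcard hg] := good_cycle hdc hch x0.
    have hk1 : (k < #|[set x in odd_index c]|)%N by rewrite hcard; apply: uphalf_ge; lia.
    split; first exact: ltnW.
    exists (nth x0 c (size c).-1), (nth x0 c 0); split => //.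
    by rewrite hk1 orbT.
  - have hbig : (size c < sizeM2)%N.
      rewrite ltnNge; apply/negP => hle; apply: nuse; exists c; split => //.
      exact: leq_trans h1 hle.
    have [hg hc] := good_anti hanti h2.
    apply: nob; first by move=> x y xI yI xy; exact: (hg x y xI yI xy).
    apply: leq_trans (hc x0); rewrite /sizeM2 in hbig; lia.
  - have hbig : (size c < sizeL)%N.
      rewrite ltnNge; apply/negP => hle; apply: nuse; exists c; split => //.
      apply: leq_trans hle; exact: ltnW.
    have [hg hc] := good_path hsh h2.
    apply: nob; first by move=> x y xI yI xy; exact: (hg x y xI yI xy).
    apply: leq_trans (hc x0); apply: uphalf_ge.
    rewrite /sizeL in hbig; lia.
have nocw : ~ (exists z q, cw z q).
  move=> hcw; apply: (proj1 hc1 ec).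
  by case: (cw_dcycle_ex hcw) => c [hc _]; exists c.
case=> [[c' [ec' _ _ _]] | [[nuse h1 h2]|[nuse h1 h2]]] //.
- have [hg hc] := good_anti hanti h2.
  apply: nob; first by move=> x y xI yI xy; exact: (hg x y xI yI xy).
    apply: leq_trans (hc x0).
  case: (pbP (exists x y, [/\ x \in Cs, y \in Cs, x != y & reach x y])) => hr.
    case: hr => x [y [xC yC xy hxy]].
    have := L2k nocw xC yC xy hxy (conj hsh hL); rewrite /sizeL /sizeM2 in h1.
    move=> e; rewrite e in h1; lia.
  exact: Anti nocw hr hM.
- have [hg hc] := good_path hsh h2.
  apply: nob; first by move=> x y xI yI xy; exact: (hg x y xI yI xy).
    apply: leq_trans (hc x0); apply: uphalf_ge.
  case: (pbP (exists x y, [/\ x \in Cs, y \in Cs, x != y & reach x y])) => hr.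
    case: hr => x [y [xC yC xy hxy]].
    have := L2k nocw xC yC xy hxy (conj hsh hL) => e; rewrite e; lia.
  have := Anti nocw hr hM; rewrite /sizeL /sizeM2 in h1; lia.
Qed.

Lemma extract_correct o : extract_res d W sigma k o ->
  exists S, [/\ o = Some S, #|S| = k & sigma <= div d S].
Proof.
case=> I [hI hif].
have [hkI [a [b [hg hab]]]] := I_good hI.
rewrite hkI in hif; case: hif => s [hs ->].
exists [set x in s]; split => //.
  by rewrite cardsE; case: (hs) => h1 h2 _ _; move/card_uniqP: h2 ->.
have hgood := greedy_good hs hg hab.
have hs' := hs; case: hs' => hsz hu _ _.
apply: div_ge.
  case: s hs hsz hu hgood => [|x [|y s]] //= _ hsz; first by lia.
    by lia.
  rewrite inE => /andP[hx _] hgood.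
  apply: le_trans (dtop_ge d x y).
  apply: hgood; rewrite ?inE ?eqxx ?orbT //.
  by move: hx; rewrite negb_or => /andP[].
by move=> u v; rewrite !inE; apply: hgood.
Qed.

End Main2.

Section Exist.
Variables (R : realFieldType) (T : finType) (d : T -> T -> R).
Variables (W : {set T}) (sigma : R) (k : nat).
Variable x0 : T.
Hypothesis x0W : x0 \in W.

Local Notation arc := (Defs.arc d W sigma).
Local Notation reach := (Defs.reach d W sigma).
Local Notation scc := (Defs.scc d W sigma).
Local Notation is_comp := (Defs.is_comp d W sigma).
Local Notation gc_path := (Defs.gc_path d W sigma).
Local Notation shortest := (Defs.shortest_gc_path d W sigma).

Lemma comp_ne0 A : is_comp A -> A != set0.
Proof. by move=> h; case: (comp_nonempty h) => x hx; apply/set0Pn; exists x. Qed.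

Lemma max_antichain_ex : exists M, max_antichain d W sigma M.
Proof.
pose P n := exists M, antichain d W sigma M /\ #|M| = n.
have P0 : P 0%N.
  by exists set0; split; [split => A; rewrite inE | exact: cards0].
have hb : forall n, P n -> (n <= #|{: {set T}}|)%N by move=> n [M [_ <-]]; apply: max_card.
case: (ex_max_nat hb P0) => n [[M [hM <-]] hmax].
exists M; split => // M' hM'; apply: hmax; by exists M'.
Qed.

Lemma shortest0 : shortest (scc x0) [::].
Proof.
split => //; rewrite /Defs.gc_path andbT; by apply/is_compP; exists x0.
Qed.

Lemma L_ex : exists a0 ps, L_choice d W sigma k a0 ps.
Proof.
case: (pbP (exists b0 qs, shortest b0 qs /\ size qs = (2 * k).-1)) => h.
  by case: h => b0 [qs [h1 h2]]; exists b0, qs; split => //; left.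
pose P n := exists b0 qs, shortest b0 qs /\ size qs = n.
have P0 : P 0%N by exists (scc x0), [::]; split => //; exact: shortest0.
have hb : forall n, P n -> (n <= #|{: {set T}}|)%N.
  by move=> n [b0 [qs [h1 <-]]]; apply: ltnW; exact: shortest_bound h1.
case: (ex_max_nat hb P0) => n [[b0 [qs [hq <-]]] hmax].
exists b0, qs; split => //; right; split.
  by move=> b1 qs' h1 h2; apply: h; exists b1, qs'.
by move=> b1 qs' h1; apply: hmax; exists b1, qs'.
Qed.

Lemma copt_ex : exists copt : option (seq T),
  (copt = None <-> ~ exists c, dcycle d W sigma c) /\
  (forall c, copt = Some c -> dcycle d W sigma c /\ chordless d W sigma c).
Proof.
case: (pbP (exists c, dcycle d W sigma c)) => h.
  case: h => c hc; case: (dcycle_cw hc) => x [q [hcw _]].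
  have : exists x q, cw d W sigma x q by exists x, q.
  case/cw_dcycle_ex => c' [h1 h2]; exists (Some c'); split; last by move=> c0 [<-].
  by split => // h'; exfalso; apply: h'; exists c'.
by exists None; split.
Qed.

Lemma I_ex : exists I, I_choice d W sigma k I.
Proof.
case: max_antichain_ex => M hM.
case: L_ex => a0 [ps hL].
case: copt_ex => copt [hc1 hc2].
have hM' := hM; case: hM' => [[hMc hMr] _].
have hsh := proj1 hL; have hgp := proj1 hsh.
pose useC := exists c, [/\ copt = Some c, ((2 * #|M|).-1 <= size c)%N & ((size ps).+1 <= size c)%N].
case: (pbP useC) => hu.
  case: hu => c [ec h1 h2]; exists [set x in odd_index c], M, a0, ps, copt; split => //.
  by left; exists c; split.
case: (leqP (size ps).+1 (2 * #|M|).-1) => hle.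
  have : exists I, one_point_each (enum M) I.
    apply: (ope_ex x0).
      by move=> A; rewrite mem_enum => hA; apply: comp_ne0; apply: hMc.
    move=> A B x; rewrite !mem_enum => hA hB xA xB.
    case: (eqVneq A B) => // nAB.
    by have := hMr A B hA hB nAB x x xA xB; rewrite reach_refl.
  case=> I hI; exists I, M, a0, ps, copt; split => //.
  by right; left; split.
have : exists I, one_point_each (odd_index (a0 :: ps)) I.
  have hcomp := gc_path_comps hgp.
  apply: (ope_ex x0).
    by move=> A /odd_index_sub hA; apply: comp_ne0; apply: hcomp.
  move=> A B x /odd_index_sub hA /odd_index_sub hB; apply: comp_disj; exact: hcomp.
case=> I hI; exists I, M, a0, ps, copt; split => //.
by right; right; split.
Qed.

Lemma extract_ex : exists o, extract_res d W sigma k o.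
Proof.
case: I_ex => I hI.
case hk: (k <= #|I|)%N.
  case: (greedy_ex d hk) => s hs.
  by exists (Some [set x in s]), I; split => //; rewrite hk; exists s.
by exists None, I; split => //; rewrite hk.
Qed.

End Exist.

Lemma extract_some_card (R : realFieldType) (T : finType) (d : T -> T -> R) W sigma k S :
  extract_res d W sigma k (Some S) -> #|S| = k.
Proof.
case=> I [_]; case: ifP => // _ [s [[h1 h2 _ _] [eS]]].
by rewrite eS cardsE; move/card_uniqP: h2 ->.
Qed.

Section Top.
Variables (R : realFieldType) (T : finType) (d : T -> T -> R) (k : nat).
Hypothesis hps : asym_pseudometric d.
Hypothesis hk : (2 <= k <= #|T|)%N.

Let d0 : forall u, d u u = 0. Proof. by case: hps. Qed.
Let tri : forall u v w, d u v <= d u w + d w v. Proof. by case: hps. Qed.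
Let dge0 : forall u v, 0 <= d u v. Proof. by case: hps. Qed.

Lemma k2 : (2 <= k)%N. Proof. by case/andP: hk. Qed.

Lemma k2pos : 0 < (2 * k)%N%:R :> R.
Proof. rewrite ltr0n; have := k2; lia. Qed.

Definition Ucf (r : R) : {set T} := epsilon (inhabits set0) (fun U => cluster_out d r U).
Definition outf (r : R) : option {set T} :=
  epsilon (inhabits None) (fun o => extract_res d (Ucf r) (r / (2 * k)%N%:R) k o).

Lemma Ucf_spec r : 0 < r -> cluster_out d r (Ucf r).
Proof.
move=> r0; apply: epsilon_spec; case: (cluster_ex d0 r0 set0) => U hU; by exists U.
Qed.

Lemma outf_spec r : 0 < r -> extract_res d (Ucf r) (r / (2 * k)%N%:R) k (outf r).
Proof.
move=> r0; apply: epsilon_spec.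
have [h1 _ _] := cluster_props (Ucf_spec r0).
have : (0 < #|T|)%N by case/andP: hk => h1' h2'; lia.
case/card_gt0P => v _.
have : v \notin (set0 : {set T}) by rewrite inE.
case/h1 => c hc _.
exact: extract_ex hc.
Qed.

Lemma bac_exists : exists o, bac_res d k o.
Proof.
pose P (p : T * T) := [/\ p.1 != p.2, 0 < d p.1 p.2 & outf (d p.1 p.2) != None].
pose g (p : T * T) := div d (odflt set0 (outf (d p.1 p.2))).
case: (pbP (forall i j, i != j -> 0 < d i j -> outf (d i j) = None)) => hall.
  exists None, Ucf, outf; split => //.
  by move=> i j hij hd; split; [apply: Ucf_spec | apply: outf_spec].
have : exists p, P p.
  case: (pbP (exists p, P p)) => // hno; exfalso; apply: hall => i j hij hd.
  apply/eqP; apply/negPn/negP => hne; apply: hno; by exists (i, j); split.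
case=> p0 hp0.
case: (ex_argmax g hp0) => p [[hp1 hp2 hp3] hmax].
case eo: (outf (d p.1 p.2)) hp3 => [S|] // _.
exists (Some S), Ucf, outf; split.
- by move=> i j hij hd; split; [apply: Ucf_spec | apply: outf_spec].
- by split => // h; exfalso; apply: hall.
- move=> S' [<-]; exists p.1, p.2; split => // i' j' S'' hij hd ho.
  have := hmax (i', j'); rewrite /g /= ho eo /=; apply; split => //.
  by rewrite ho.
Qed.


Lemma bac_correct o : 0 < ammd_opt d k -> bac_res d k o ->
  exists S : {set T}, [/\ o = Some S, #|S| = k & ammd_opt d k / (6 * k)%N%:R <= div d S].
Proof.
move=> hRs [Uc [out [h1 /proj1 h2 h3]]]; move: h2 h3.
set Rs := ammd_opt d k in hRs *.
case: (ammd_attained hRs) => O [hO hdivO]; rewrite -/Rs in hdivO.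
have hOd : forall x y, x \in O -> y \in O -> x != y -> Rs <= d x y.
  by move=> x y xO yO xy; rewrite -hdivO; apply: div_le.
have : (1 < #|O|)%N by rewrite hO k2.
case/card_gt1P => o1 [o2 [o1O o2O o12]].
pose Pb (p : T * T) := p.1 != p.2 /\ Rs / 3 <= d p.1 p.2.
have Rs3 : 0 < Rs / 3 by lra.
have hp0 : Pb (o1, o2) by split => //=; have := hOd o1 o2 o1O o2O o12; lra.
case: (ex_argmin (fun p : T * T => d p.1 p.2) hp0) => [[i0 j0] [[/= hij0 hRb3] hmin]].
set Rb := d i0 j0 in hRb3 hmin.
have hRb : 0 < Rb by lra.
have hminp : forall x y, x != y -> Rs / 3 <= d x y -> Rb <= d x y.
  by move=> x y xy hxy; apply: (hmin (x, y)).
have small : forall c v, dmax d c v < Rb -> dmax d c v < Rs / 3.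
  move=> c v h; rewrite ltNge; apply/negP => hge.
  case: (eqVneq c v) => [e | cv].
    by move: hge; rewrite e dmax0 // => h'; lra.
  move: hge; rewrite {1}/dmax le_max => /orP[hh | hh].
    have := hminp _ _ cv hh; have := dmax_ge1 d c v; lra.
  have vc : v != c by rewrite eq_sym.
  have := hminp _ _ vc hh; have := dmax_ge2 d c v; lra.
have [hcl hext] := h1 i0 j0 hij0 hRb.
rewrite -/Rb in hcl hext.
set W := Uc Rb in hcl hext.
have [hcen _ hsep] := cluster_props hcl.
pose cen v := odflt v [pick c in W | dmax d c v < Rb].
have cen_spec : forall v, cen v \in W /\ dmax d (cen v) v < Rb.
  move=> v; rewrite /cen; case: pickP => [c /andP[h h'] | hno] //=.
  have : v \notin (set0 : {set T}) by rewrite inE.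
  by case/hcen => c hc hcv; move: (hno c); rewrite hc hcv.
pose Cs := [set cen v | v in O].
set K := (2 * k)%N%:R : R.
have K0 : 0 < K by apply: k2pos.
set sigma := Rb / K in hext.
have sig0 : 0 < sigma by rewrite divr_gt0.
have Ksig : K * sigma = Rb by rewrite /sigma mulrC divfK // gt_eqF.
have hinj : {in O &, injective cen}.
  move=> x y xO yO e; apply/eqP; apply/negPn/negP => xy.
  have := hOd x y xO yO xy.
  have [_ hx] := cen_spec x; have [_ hy] := cen_spec y.
  rewrite e in hx.
  have hx' := small _ _ hx; have hy' := small _ _ hy.
  have := tri x y (cen y); have := dmax_ge2 d (cen y) x; have := dmax_ge1 d (cen y) y.
  lra.
have hCW : Cs \subset W.
  by apply/subsetP => x /imsetP[v _ ->]; case: (cen_spec v).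
have hCk : #|Cs| = k by rewrite card_in_imset.
have HC : forall x y, x \in Cs -> y \in Cs -> x != y -> K * sigma <= d x y.
  move=> x y /imsetP[v1 v1O ->] /imsetP[v2 v2O ->] xy.
  have v12 : v1 != v2 by apply: contraNneq xy => ->.
  rewrite Ksig; apply: hminp => //.
  have := hOd v1 v2 v1O v2O v12.
  have [_ hx] := cen_spec v1; have [_ hy] := cen_spec v2.
  have hx' := small _ _ hx; have hy' := small _ _ hy.
  have := tri v1 v2 (cen v1); have := tri (cen v1) v2 (cen v2).
  have := dmax_ge2 d (cen v1) v1; have := dmax_ge1 d (cen v2) v2.
  lra.
have Hsep : forall x y, x \in W -> y \in W -> x != y -> K * sigma <= dmax d x y.
  by move=> x y hx hy xy; rewrite Ksig; apply: hsep.
have [S0 [eo0 _ hS0]] := extract_correct tri sig0 (k2) Hsep hCW hCk HC hext.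
move=> h2 h3; case eo: o => [S|].
  have [i [j [hij hd ho hmx]]] := h3 S eo.
  have hS : #|S| = k by have := (h1 i j hij hd).2; rewrite ho; apply: extract_some_card.
  exists S; split => //.
  have := hmx i0 j0 S0 hij0 hRb eo0 => hle.
  apply: le_trans hle; apply: le_trans hS0.
  have -> : (6 * k)%N%:R = 3 * K :> R by rewrite /K -natrM mulnA.
  by rewrite /sigma invfM mulrA ler_wpM2r // ?invr_ge0 ?ltW //; lra.
have := h2 eo i0 j0 hij0 hRb; rewrite -/Rb eo0 => hh; discriminate hh.
Qed.

End Top.

Theorem theorem5p5 (R : realFieldType) (T : finType) (d : T -> T -> R) (k : nat) :
  asym_pseudometric d ->
  (2 <= k <= #|T|)%N ->
  0 < ammd_opt d k ->
  (exists o, bac_res d k o) /\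
  forall o, bac_res d k o ->
    exists S : {set T}, [/\ o = Some S, #|S| = k &
      ammd_opt d k / (6 * k)%N%:R <= div d S].
Proof.
move=> hps hk hR; split; first exact: bac_exists.
by move=> o ho; apply: bac_correct.
Qed.
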